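(* For $m\ge 2$, let $h_m^{+}$ and $h_m^{-}$ denote respectively the largest and the smallest number of matching coalescent histories of a species tree with $m$ leaves, the maximum and minimum being taken over all species trees with $m$ leaves, and let $R(m)=h_m^{+}/h_m^{-}$. Then for every odd $m\ge 7$, $$R(m)\ge\left(\frac{\sqrt{m-1}}{4\sqrt{e}}\right)^{m}.$$
   Context: A species tree is a rooted binary tree whose leaves carry distinct labels. Each node $v$ of a tree $t$ has a branch directly above it: for a non-root node this is the edge joining $v$ to its parent, and the root additionally has a root branch above it. A leaf $x$ descends from a branch if $x$ lies in the subtree below that branch. A branch $b'$ is descended from a branch $b$ if the node at the lower end of $b'$ lies in the subtree below $b$. Given a species tree $t$, a matching coalescent history of $t$ is a map $h$ from the set of internal nodes of $t$ to the set of branches of $t$ such that: (a) for every leaf $x$ and internal node $k$, if $x$ descends from $k$ then $x$ descends from the branch $h(k)$; (b) for all internal nodes $k_1,k_2$, if $k_2$ is a descendant of $k_1$ then $h(k_2)$ is descended from or coincides with $h(k_1)$. The number of matching coalescent histories depends only on the unlabeled shape of the tree. *)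

(* Defs.v *)
From mathcomp Require Import all_boot.
From Stdlib Require Import Reals.

Set Implicit Arguments.
Unset Strict Implicit.
Unset Printing Implicit Defensive.

(* The number of matching coalescent
   histories depends only on the shape, and every shape with m leaves
   admits a labeling by m distinct labels, so max/min over labeled species
   trees with m leaves equal max/min over shapes with m leaves. *)
Inductive tree : Type := Leaf | Node of tree & tree.

Fixpoint nleaves (t : tree) : nat :=
  match t with Leaf => 1 | Node l r => nleaves l + nleaves r end.

(* Nodes are identified by their address: the path from the root
   (false = left child, true = right child).  The subtree below node
   (equivalently, below the branch above node) with address a consists of
   the nodes whose address has a as a prefix. *)
Fixpoint nodes (t : tree) : seq (seq bool) :=
  match t with
  | Leaf => [:: [::]]
  | Node l r => [::] :: map (cons false) (nodes l) ++ map (cons true) (nodes r)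
  end.

Fixpoint inodes (t : tree) : seq (seq bool) :=
  match t with
  | Leaf => [::]
  | Node l r => [::] :: map (cons false) (inodes l) ++ map (cons true) (inodes r)
  end.

Fixpoint leaves (t : tree) : seq (seq bool) :=
  match t with
  | Leaf => [:: [::]]
  | Node l r => map (cons false) (leaves l) ++ map (cons true) (leaves r)
  end.

Definition below (x y : seq bool) : bool := prefix x y.

(* internal nodes of t, and branches of t (one branch above each node) *)
Definition INode (t : tree) := seq_sub (inodes t).
Definition Branch (t : tree) := seq_sub (nodes t).

Definition is_mch (t : tree) (h : {ffun INode t -> Branch t}) : bool :=
  [forall k : INode t,
     all (fun x => below (ssval k) x ==> below (ssval (h k)) x) (leaves t)]
  && [forall k1 : INode t, forall k2 : INode t,
        below (ssval k1) (ssval k2) ==> below (ssval (h k1)) (ssval (h k2))].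

Definition nmch (t : tree) : nat :=
  #|[pred h : {ffun INode t -> Branch t} | is_mch h]|.

Definition is_hplus (m v : nat) : Prop :=
  (exists t, nleaves t = m /\ nmch t = v) /\
  (forall t, nleaves t = m -> nmch t <= v).

Definition is_hminus (m v : nat) : Prop :=
  (exists t, nleaves t = m /\ nmch t = v) /\
  (forall t, nleaves t = m -> v <= nmch t).

(* Main.v *)
Require Import Defs.
From Stdlib Require Import Reals Lra Psatz Arith Lia.

Section RealPart.
Local Open Scope R_scope.

Lemma exp_cubic z : 0 <= z -> 1 + z + z^2/2 + z^3/6 <= exp z.
Proof.
intro Hz.
assert (Hg : Un_growing (E1 z)).
{ intro n. unfold E1. rewrite tech5.
  assert (0 <= / INR (fact (S n)) * z ^ S n).
  { apply Rmult_le_pos. left; apply Rinv_0_lt_compat, INR_fact_lt_0. apply pow_le; lra. }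
  lra. }
pose proof (growing_ineq (E1 z) (exp z) Hg (E1_cvg z) 3) as H.
unfold E1 in H. simpl in H. lra.
Qed.

Lemma ln_bound y : 0 <= y <= 1 -> 1 + y <= exp (y - y^2/2 + y^3/3).
Proof.
intros [H0 H1].
set (z := y - y^2/2 + y^3/3).
assert (Hz : 0 <= z) by (unfold z; nra).
pose proof (exp_cubic z Hz).
assert (E : z + z^2/2 + z^3/6 - y =
  y^4 * (5/24 + y/8 - 19/144*y^2 + 7/72*y^3 - y^4/36 + y^5/162)) by (unfold z; field).
assert (Q : 0 <= 5/24 + y/8 - 19/144*y^2 + 7/72*y^3 - y^4/36 + y^5/162).
{ assert (0 <= y^2 <= 1) by nra. assert (0 <= y^3) by (apply pow_le; lra).
  assert (y^4 <= y^3) by (simpl; nra). assert (0 <= y^5) by (apply pow_le; lra). nra. }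
assert (0 <= y^4 * (5/24 + y/8 - 19/144*y^2 + 7/72*y^3 - y^4/36 + y^5/162)).
{ apply Rmult_le_pos; [apply pow_le; lra | exact Q]. }
lra.
Qed.

Lemma exp_pow_n x n : exp x ^ n = exp (INR n * x).
Proof.
induction n as [|n IH]. simpl. rewrite Rmult_0_l, exp_0. reflexivity.
rewrite S_INR. simpl pow. rewrite IH. rewrite <- exp_plus. f_equal. ring.
Qed.

Lemma exp_le x y : x <= y -> exp x <= exp y.
Proof. intro H. destruct (Rle_lt_or_eq_dec _ _ H). left; apply exp_increasing; auto. subst; lra. Qed.

Lemma keyK (k : nat) : (1 <= k)%nat ->
  (1 + 1/INR k)^(2*k) * (1 + 1/(INR k + 10)) <= exp 2.
Proof.
intro hk. assert (Hx : 1 <= INR k) by (apply (le_INR 1); lia).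
set (y := 1 / INR k).
assert (Hyp : 0 < y) by (unfold y; apply Rdiv_lt_0_compat; lra).
assert (Hy : 0 <= y <= 1).
{ split. lra. unfold y. apply (Rmult_le_reg_r (INR k)); [lra|]. field_simplify; lra. }
pose proof (ln_bound y Hy) as B1.
pose proof (exp_ineq1_le (1 / (INR k + 10))) as B2.
assert (0 < 1/(INR k + 10)) by (apply Rdiv_lt_0_compat; lra).
apply Rle_trans with (exp (y - y^2/2 + y^3/3) ^ (2*k) * exp (1/(INR k + 10))).
{ apply Rmult_le_compat.
  - apply pow_le. lra.
  - lra.
  - apply pow_incr. lra.
  - lra. }
rewrite exp_pow_n, <- exp_plus. apply exp_le.
rewrite mult_INR. replace (INR 2) with 2 by (simpl; ring).
assert (E : 2 * INR k * (y - y ^ 2 / 2 + y ^ 3 / 3) + 1 / (INR k + 10) =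
   2 - ((28 * INR k - 20) / (3 * INR k * INR k * (INR k + 10)))).
{ unfold y. field. lra. }
rewrite E.
assert (0 <= (28 * INR k - 20) / (3 * INR k * INR k * (INR k + 10))).
{ apply Rmult_le_pos. lra. left. apply Rinv_0_lt_compat. apply Rmult_lt_0_compat; [nra|lra]. }
lra.
Qed.

Lemma key_poly (k : nat) : (1 <= k)%nat ->
  INR (S k) ^ (2*k) * (INR k + 11) <= exp 1 ^ 2 * (INR k ^ (2*k) * (INR k + 10)).
Proof.
intro hk. assert (Hx : 1 <= INR k) by (apply (le_INR 1); lia).
pose proof (keyK k hk) as K.
assert (E2 : exp 2 = exp 1 ^ 2) by (replace 2 with (1+1) by ring; rewrite exp_plus; ring).
rewrite <- E2.
assert (E : INR (S k) ^ (2*k) * (INR k + 11) =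
   (INR k ^ (2*k) * (INR k + 10)) * ((1 + 1/INR k)^(2*k) * (1 + 1/(INR k + 10)))).
{ replace (1 + 1/INR k) with (INR (S k) * / INR k) by (rewrite S_INR; field; lra).
  rewrite Rpow_mult_distr. rewrite pow_inv.
  rewrite S_INR. field. split. lra. apply pow_nonzero. lra. }
rewrite E. rewrite (Rmult_comm (exp 2)). apply Rmult_le_compat_l.
apply Rmult_le_pos. apply pow_le; lra. lra. exact K.
Qed.

Lemma stirl (k : nat) : (1 <= k)%nat ->
  exp 1 ^ 2 * (INR k ^ (2*k) * (INR k + 10)) <= 11 * INR (fact k) ^ 2 * exp 1 ^ (2*k).
Proof.
intro hk. induction k as [|k IH]. lia.
destruct (Nat.eq_dec k 0) as [->|Hk].
{ simpl. lra. }
assert (hk' : (1 <= k)%nat) by lia.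
specialize (IH hk').
assert (Hx : 1 <= INR k) by (apply (le_INR 1); lia).
pose proof (key_poly k hk') as KP.
replace (2 * S k)%nat with (2 + 2*k)%nat by lia.
rewrite !pow_add. rewrite fact_simpl, mult_INR.
replace (INR (S k) + 10) with (INR k + 11) by (rewrite S_INR; ring).
assert (He : 0 < exp 1) by apply exp_pos.
assert (0 < INR (S k) ^ 2) by (apply pow_lt; rewrite S_INR; lra).
assert (0 < exp 1 ^ 2) by (apply pow_lt; lra).
apply Rle_trans with (exp 1 ^ 2 * INR (S k) ^ 2 * (INR (S k) ^ (2 * k) * (INR k + 11))).
{ right; ring. }
apply Rle_trans with (exp 1 ^ 2 * INR (S k) ^ 2 * (exp 1 ^ 2 * (INR k ^ (2 * k) * (INR k + 10)))).
{ apply Rmult_le_compat_l. nra. exact KP. }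
apply Rle_trans with (exp 1 ^ 2 * INR (S k) ^ 2 * (11 * INR (fact k) ^ 2 * exp 1 ^ (2 * k))).
{ apply Rmult_le_compat_l. nra. exact IH. }
right. simpl. ring.
Qed.

Lemma real_final (k : nat) (P H : R) : (1 <= k)%nat ->
  2 ^ k * INR (fact k) <= P -> 1 <= H -> H <= 16 ^ k ->
  (sqrt (INR (2*k+1) - 1) / (4 * sqrt (exp 1))) ^ (2*k+1) <= P / H.
Proof.
intros hk HP H1 H2.
assert (Hx : 1 <= INR k) by (apply (le_INR 1); lia).
assert (He : 2 <= exp 1) by (pose proof (exp_ineq1_le 1); lra).
assert (Hse : 0 < sqrt (exp 1)) by (apply sqrt_lt_R0; lra).
set (a := sqrt (INR (2*k+1) - 1) / (4 * sqrt (exp 1))).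
assert (HI : INR (2*k+1) - 1 = 2 * INR k).
{ rewrite plus_INR, mult_INR. simpl. ring. }
assert (Ha0 : 0 <= a).
{ unfold a. apply Rmult_le_pos. apply sqrt_pos. left; apply Rinv_0_lt_compat; lra. }
assert (Ha2 : a ^ 2 = 2 * INR k / (16 * exp 1)).
{ unfold a. rewrite HI. unfold Rdiv. rewrite Rpow_mult_distr. rewrite pow_inv.
  replace ((4 * sqrt (exp 1))^2) with (16 * (sqrt (exp 1) * sqrt (exp 1))) by ring.
  rewrite sqrt_sqrt by lra. simpl. rewrite Rmult_1_r, sqrt_sqrt by lra. reflexivity. }
set (X := 2 ^ k * INR (fact k) / 16 ^ k).
assert (H16 : 0 < 16 ^ k) by (apply pow_lt; lra).
assert (HF : 0 < INR (fact k)) by apply INR_fact_lt_0.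
assert (H2k : 0 < 2 ^ k) by (apply pow_lt; lra).
assert (HX0 : 0 <= X) by (unfold X; apply Rmult_le_pos; [nra| left; apply Rinv_0_lt_compat; lra]).
assert (HXP : X <= P / H).
{ unfold X. apply Rle_trans with (P / 16 ^ k).
  - unfold Rdiv. apply Rmult_le_compat_r. left; apply Rinv_0_lt_compat; lra. exact HP.
  - unfold Rdiv. apply Rmult_le_compat_l. nra. apply Rinv_le_contravar; lra. }
apply Rle_trans with X; [|exact HXP].
apply Rsqr_incr_0_var; [|exact HX0].
unfold Rsqr.
replace (a ^ (2*k+1) * a ^ (2*k+1)) with ((a^2)^(2*k+1))
  by (rewrite <- pow_mult, <- pow_add; f_equal; lia).
rewrite Ha2.
set (K := INR k ^ (2*k)). set (E := exp 1 ^ (2*k)). set (F := INR (fact k)).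
set (D := 8 ^ (2*k)).
assert (HK : 0 <= K) by (unfold K; apply pow_le; lra).
assert (HE : 0 < E) by (unfold E; apply pow_lt; lra).
assert (HD : 0 < D) by (unfold D; apply pow_lt; lra).
assert (E1 : (2 * INR k / (16 * exp 1)) ^ (2*k+1) = K * INR k * / (D * 8 * E * exp 1)).
{ replace (2 * INR k / (16 * exp 1)) with (INR k * / (8 * exp 1)) by (field; lra).
  rewrite Rpow_mult_distr, pow_inv, Rpow_mult_distr, !pow_add.
  unfold K, D, E. rewrite !pow_1. field. repeat split; try apply pow_nonzero; lra. }
assert (E2 : X * X = (8 * E * exp 1 * F ^ 2) * / (D * 8 * E * exp 1)).
{ unfold X. replace 16 with (2 * 8) by ring. rewrite Rpow_mult_distr.
  unfold D. replace (2*k)%nat with (k+k)%nat by lia. rewrite pow_add.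
  unfold F. field. repeat split; try apply pow_nonzero; lra. }
rewrite E1, E2. apply Rmult_le_compat_r.
{ left; apply Rinv_0_lt_compat. apply Rmult_lt_0_compat; [|lra]. nra. }
pose proof (stirl k hk) as S. fold K E F in S.
assert (HF2 : 0 < F^2) by (unfold F; apply pow_lt; lra).
assert (Kk : K * INR k <= K * (INR k + 10)) by nra.
assert (Hee : 64 <= 8 * exp 1 ^ 3) by (simpl; nra).
assert (exp 1 ^ 2 * (K * INR k) <= exp 1 ^ 2 * (8 * E * exp 1 * F^2)).
{ apply Rle_trans with (exp 1 ^ 2 * (K * (INR k + 10))).
  apply Rmult_le_compat_l. nra. exact Kk.
  apply Rle_trans with (11 * F^2 * E). nra.
  replace (exp 1 ^ 2 * (8 * E * exp 1 * F ^ 2)) with ((8 * exp 1 ^ 3) * (F^2 * E)) by ring.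
  assert (0 < F^2 * E) by nra. nra. }
apply (Rmult_le_reg_l (exp 1 ^ 2)). apply pow_lt; lra. exact H0.
Qed.

End RealPart.

From mathcomp Require Import all_boot.
From mathcomp Require Import zify.
Set Implicit Arguments.
Unset Strict Implicit.
Unset Printing Implicit Defensive.

Lemma cons_inj (b : bool) : injective (cons b).
Proof. by move=> x y []. Qed.

Lemma ft : (false == true) = false. Proof. by []. Qed.
Lemma tf : (true == false) = false. Proof. by []. Qed.
Lemma consnil (b : bool) (k : seq bool) : (b :: k == [::]) = false. Proof. by []. Qed.
Lemma nilnil : ([::] == [::] :> seq bool) = true. Proof. by []. Qed.

Lemma mem_cons_map (b c : bool) (k : seq bool) (s : seq (seq bool)) :
  (b :: k \in map (cons c) s) = (b == c) && (k \in s).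
Proof.
case: (eqVneq b c) => [->|nbc] /=; first by rewrite mem_map //; exact: cons_inj.
by apply/mapP => -[y _ [E _]]; rewrite E eqxx in nbc.
Qed.

Lemma in_inodes_node l r k : k \in inodes (Node l r) =
  match k with [::] => true | false :: k' => k' \in inodes l | true :: k' => k' \in inodes r end.
Proof.
by case: k => [|[] k]; rewrite in_cons mem_cat ?mem_cons_map ?ft ?tf ?consnil ?nilnil ?eqxx ?andFb ?andTb ?orFb ?orbF //.
Qed.

Lemma in_nodes_node l r k : k \in nodes (Node l r) =
  match k with [::] => true | false :: k' => k' \in nodes l | true :: k' => k' \in nodes r end.
Proof.
by case: k => [|[] k]; rewrite in_cons mem_cat ?mem_cons_map ?ft ?tf ?consnil ?nilnil ?eqxx ?andFb ?andTb ?orFb ?orbF //.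
Qed.

Lemma in_leaves_node l r k : k \in leaves (Node l r) =
  match k with [::] => false | false :: k' => k' \in leaves l | true :: k' => k' \in leaves r end.
Proof.
case: k => [|[] k]; rewrite mem_cat ?mem_cons_map ?ft ?tf ?eqxx ?andFb ?andTb ?orFb ?orbF //.
by apply/orP => -[] /mapP [y _].
Qed.

Lemma root_nodes t : [::] \in nodes t.
Proof. by case: t. Qed.

Lemma inodes_nodes t k : k \in inodes t -> k \in nodes t.
Proof.
elim: t k => [|l IHl r IHr] k //.
rewrite in_inodes_node in_nodes_node.
case: k => [|[] k] //; [exact: IHr | exact: IHl].
Qed.

Lemma prefix_nodes t p k : prefix p k -> k \in nodes t -> p \in nodes t.
Proof.
elim: t p k => [|l IHl r IHr] p k.
  by rewrite /= inE => + /eqP E; subst k; case: p.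
case: p => [|bb p]; first by rewrite root_nodes.
case: k => [|c k] //= /andP [/eqP <- Hp].
rewrite !in_nodes_node.
by case: bb; [apply: IHr | apply: IHl].
Qed.

Lemma node_leaf t k : k \in nodes t -> exists2 x, x \in leaves t & prefix k x.
Proof.
elim: t k => [|l IHl r IHr] k.
  by rewrite inE => /eqP ->; exists [::].
rewrite in_nodes_node.
case: k => [|[] k] H.
- have [x Hx _] := IHl _ (root_nodes l).
  by exists (false :: x); rewrite ?in_leaves_node.
- have [x Hx Hp] := IHr _ H.
  by exists (true :: x); rewrite ?in_leaves_node //= eqxx.
- have [x Hx Hp] := IHl _ H.
  by exists (false :: x); rewrite ?in_leaves_node //= eqxx.
Qed.

Lemma inode_leaves t k (b : bool) : k \in inodes t ->
  exists2 x, x \in leaves t & prefix (rcons k b) x.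
Proof.
elim: t k => [|l IHl r IHr] k //.
rewrite in_inodes_node.
case: k => [|[] k] H.
- clear IHl IHr; case: b.
  + have [x Hx _] := node_leaf (root_nodes r).
    by exists (true :: x); rewrite ?in_leaves_node //= prefix0s.
  + have [x Hx _] := node_leaf (root_nodes l).
    by exists (false :: x); rewrite ?in_leaves_node //= prefix0s.
- have [x Hx Hp] := IHr _ H.
  by exists (true :: x); rewrite ?in_leaves_node //= eqxx.
- have [x Hx Hp] := IHl _ H.
  by exists (false :: x); rewrite ?in_leaves_node //= eqxx.
Qed.

Lemma prefix_split (b k s1 s2 : seq bool) :
  prefix b (k ++ false :: s1) -> prefix b (k ++ true :: s2) -> prefix b k.
Proof.
elim: k b => [|c k IH] [|d b] //=.
  by case: d.
by case/andP => /eqP -> H1 /andP [_ H2]; rewrite eqxx (IH _ H1 H2).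
Qed.

Lemma prefix_cmp (b1 b2 s : seq bool) :
  prefix b1 s -> prefix b2 s -> prefix b1 b2 = (size b1 <= size b2).
Proof.
elim: s b1 b2 => [|c s IH] [|d1 b1] [|d2 b2] /=; rewrite ?consnil ?prefix0s //.
by move=> /andP [/eqP -> H1] /andP [/eqP -> H2]; rewrite eqxx IH.
Qed.

Lemma prefix_eq_size (b1 b2 s : seq bool) :
  prefix b1 s -> prefix b2 s -> size b1 = size b2 -> b1 = b2.
Proof.
elim: s b1 b2 => [|c s IH] [|d1 b1] [|d2 b2] /=; rewrite ?consnil ?prefix0s //.
by move=> /andP [/eqP -> H1] /andP [/eqP -> H2] [E]; rewrite (IH _ _ H1 H2 E).
Qed.

Lemma prefix_rcons_self (k : seq bool) b : prefix k (rcons k b).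
Proof. by apply/prefixP; exists [:: b]; rewrite cats1. Qed.

Lemma mch_prefix t (h : {ffun INode t -> Branch t}) : is_mch h ->
  (forall k : INode t, prefix (ssval (h k)) (ssval k)) /\
  (forall k1 k2 : INode t, prefix (ssval k1) (ssval k2) ->
     size (ssval (h k1)) <= size (ssval (h k2))).
Proof.
case/andP => /forallP H1 /forallP H2. split.
- move=> k. have Hk := ssvalP k.
  have [x Hx Px] := inode_leaves false Hk.
  have [y Hy Py] := inode_leaves true Hk.
  have /allP A := H1 k.
  have := A x Hx; rewrite /below (prefix_trans (prefix_rcons_self _ _) Px) /= => Hhx.
  have := A y Hy; rewrite /below (prefix_trans (prefix_rcons_self _ _) Py) /= => Hhy.
  case/prefixP: Px => s1 Ex. case/prefixP: Py => s2 Ey.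
  rewrite Ex cat_rcons in Hhx. rewrite Ey cat_rcons in Hhy.
  exact: prefix_split Hhx Hhy.
- move=> k1 k2 P. have /forallP/(_ k2) := H2 k1. rewrite /below P /=. exact: size_prefix.
Qed.

Lemma mch_of t (h : {ffun INode t -> Branch t}) :
  (forall k : INode t, prefix (ssval (h k)) (ssval k)) ->
  (forall k1 k2 : INode t, prefix (ssval k1) (ssval k2) ->
     size (ssval (h k1)) <= size (ssval (h k2))) -> is_mch h.
Proof.
move=> H M. apply/andP; split; apply/forallP.
- move=> k; apply/allP => x _; apply/implyP => Pk. exact: prefix_trans (H k) Pk.
- move=> k1; apply/forallP => k2; apply/implyP => P12.
  rewrite /below (prefix_cmp (s:=ssval k2)) ?M //.
  exact: prefix_trans (H k1) P12.
Qed.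

Fixpoint g (t : tree) (n : nat) : nat :=
  match t with
  | Leaf => 1
  | Node l r => \sum_(1 <= q < n.+2) g l q * g r q
  end.

Fixpoint V (t : tree) (n : nat) : seq (seq nat) :=
  match t with
  | Leaf => [:: [::]]
  | Node l r => flatten [seq [seq (n.+1 - q) :: (map (addn (n.+1 - q)) a ++ map (addn (n.+1 - q)) b)
                             | a <- V l q, b <- V r q] | q <- iota 1 n.+1]
  end.

Definition valid t n (d : seq bool -> nat) :=
  (forall k, k \in inodes t -> d k <= size k + n) /\
  (forall k1 k2, k1 \in inodes t -> k2 \in inodes t -> prefix k1 k2 -> d k1 <= d k2).

Lemma V_char t n v : v \in V t n <-> exists d, valid t n d /\ v = map d (inodes t).
Proof.
elim: t n v => [|l IHl r IHr] n v.
  split; first by rewrite inE => /eqP ->; exists (fun _ => 0).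
  by case=> d [_ ->]; rewrite inE.
split.
- case/flattenP => s /mapP [q Hq ->] /allpairsP [[a b] [/= Ha Hb ->]].
  have [dl [[Bl Ml] ->]] := (IHl q a).1 Ha.
  have [dr [[Br Mr] ->]] := (IHr q b).1 Hb.
  rewrite mem_iota in Hq.
  set x := n.+1 - q.
  exists (fun k => match k with [::] => x | false :: k' => x + dl k' | true :: k' => x + dr k' end).
  split; last first.
    by rewrite /= map_cat -!map_comp.
  split.
  + move=> k; rewrite in_inodes_node; case: k => [|[] k] Hk /=.
    * rewrite /x; lia.
    * have := Br k Hk; rewrite /x; move: Hq; case/andP; simpl; lia.
    * have := Bl k Hk; rewrite /x; move: Hq; case/andP; simpl; lia.
  + move=> k1 k2; rewrite !in_inodes_node.
    case: k1 => [|[] k1]; case: k2 => [|[] k2] H1 H2 //=; rewrite ?leq_addr ?leqnn ?ft ?tf ?eqxx //=.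
    * by move=> P; rewrite leq_add2l Mr.
    * by move=> P; rewrite leq_add2l Ml.
- case=> d [[B M] ->].
  have Hr : [::] \in inodes (Node l r) by [].
  set x := d [::].
  have Hx : x <= n by have := B _ Hr.
  have Hge : forall k, k \in inodes (Node l r) -> x <= d k.
    by move=> k Hk; apply: M Hr Hk (prefix0s _).
  apply/flattenP.
  eexists; first by apply/mapP; exists (n.+1 - x); [rewrite mem_iota; lia | reflexivity].
  have E : n.+1 - (n.+1 - x) = x by lia.
  rewrite E.
  apply/allpairsP.
  exists (map (fun k => d (false :: k) - x) (inodes l), map (fun k => d (true :: k) - x) (inodes r)).
  split => /=.
  + apply/IHl; eexists; split; last by reflexivity.
    split.
    * move=> k Hk. have := B (false :: k); rewrite in_inodes_node => /(_ Hk) /=. lia.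
    * move=> k1 k2 H1 H2 P. rewrite leq_sub2r // M ?in_inodes_node //= eqxx.
  + apply/IHr; eexists; split; last by reflexivity.
    split.
    * move=> k Hk. have := B (true :: k); rewrite in_inodes_node => /(_ Hk) /=. lia.
    * move=> k1 k2 H1 H2 P. rewrite leq_sub2r // M ?in_inodes_node //= eqxx.
  + rewrite /= map_cat -!map_comp. congr (_ :: _ ++ _); apply/eq_in_map => k Hk /=.
    * by rewrite subnKC // Hge // in_inodes_node.
    * by rewrite subnKC // Hge // in_inodes_node.
Qed.

Lemma V_size t n v : v \in V t n -> size v = size (inodes t).
Proof. by case/V_char => d [_ ->]; rewrite size_map. Qed.

Lemma flatten_uniq_key (T : eqType) (W : nat -> seq T) (key : T -> nat) s :
  uniq s -> (forall q, q \in s -> uniq (W q)) ->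
  (forall q v, q \in s -> v \in W q -> key v = q) -> uniq (flatten (map W s)).
Proof.
elim: s => [|q s IH] //= /andP [qs us] HU HK.
rewrite cat_uniq HU ?mem_head // IH //; first last.
- by move=> q' v Hq' Hv; apply: HK; rewrite ?inE ?Hq' ?orbT.
- by move=> q' Hq'; apply: HU; rewrite inE Hq' orbT.
rewrite andbT /=.
apply/hasPn => v /flattenP [w /mapP [q' Hq' ->] Hv]. apply/negP => Hvq.
have E1 := HK q v (mem_head _ _) Hvq.
have E2 := HK q' v (ltac:(by rewrite inE Hq' orbT)) Hv.
by move: qs; rewrite -E1 E2 Hq'.
Qed.

Lemma V_uniq t n : uniq (V t n).
Proof.
elim: t n => [|l IHl r IHr] n; first by [].
apply: (flatten_uniq_key (W := fun q => [seq (n.+1 - q) :: (map (addn (n.+1 - q)) a ++ map (addn (n.+1 - q)) b) | a <- V l q, b <- V r q]) (key := fun v => n.+1 - head 0 v)).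
- exact: iota_uniq.
- move=> q Hq. apply: allpairs_uniq => //.
  move=> [a1 b1] [a2 b2] /allpairsP [[a b] [Ha Hb [-> ->]]] /allpairsP [[a' b'] [Ha' Hb' [-> ->]]] /= [].
  move/eqP. rewrite eqseq_cat; last by rewrite !size_map (V_size Ha) (V_size Ha').
  case/andP => /eqP /inj_map E1 /eqP /inj_map E2.
  by rewrite (E1 (@addnI (n.+1 - q))) (E2 (@addnI (n.+1 - q))).
- move=> q v Hq /allpairsP [[a b] [_ _ ->]] /=. rewrite mem_iota in Hq; lia.
Qed.

Lemma V_node l r n : V (Node l r) n = flatten [seq [seq (n.+1 - q) :: (map (addn (n.+1 - q)) a ++ map (addn (n.+1 - q)) b)
                             | a <- V l q, b <- V r q] | q <- iota 1 n.+1].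
Proof. by []. Qed.

Lemma g_node l r n : g (Node l r) n = \sum_(1 <= q < n.+2) g l q * g r q.
Proof. by []. Qed.

Lemma V_size_g t n : size (V t n) = g t n.
Proof.
elim: t n => [|l IHl r IHr] n; first by [].
rewrite V_node g_node size_flatten /shape -map_comp sumnE big_map.
rewrite /index_iota subSS subn0.
apply: eq_bigr => q _ /=. by rewrite size_allpairs IHl IHr.
Qed.

Definition dH t (h : {ffun INode t -> Branch t}) (k : seq bool) : nat :=
  if (insub k : option (INode t)) is Some x then size (ssval (h x)) else 0.

Lemma dH_val t (h : {ffun INode t -> Branch t}) (x : INode t) :
  dH h (ssval x) = size (ssval (h x)).
Proof. by rewrite /dH (valK x). Qed.

Lemma inode_ex t k : k \in inodes t -> exists x : INode t, ssval x = k.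
Proof. by move=> Hk; exists (SeqSub Hk). Qed.

Lemma nmch_g t : nmch t = g t 0.
Proof.
rewrite /nmch -V_size_g.
set P := [pred h : {ffun INode t -> Branch t} | is_mch h].
rewrite -(size_image (fun h => map (dH h) (inodes t)) P).
apply/perm_size/uniq_perm; last 1 first.
- move=> v; apply/idP/idP => [/imageP [h Hh ->] | Hv].
  + have [Hp Hm] := mch_prefix Hh.
    apply/V_char; exists (dH h); split => //. split.
    * move=> k Hk; have [x <-] := inode_ex Hk; rewrite dH_val addn0; exact: size_prefix.
    * move=> k1 k2 H1 H2 Pk; have [x1 E1] := inode_ex H1; have [x2 E2] := inode_ex H2.
      rewrite -E1 -E2 !dH_val; apply: Hm; by rewrite E1 E2.
  + have [d [[B M] ->]] := (V_char _ _ _).1 Hv.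
    apply/imageP.
    pose b0 : Branch t := SeqSub (root_nodes t).
    pose h0 := [ffun x : INode t => insubd b0 (take (d (ssval x)) (ssval x))].
    have Hv0 : forall x, ssval (h0 x) = take (d (ssval x)) (ssval x).
      move=> x; rewrite ffunE insubdK //.
      exact: prefix_nodes (prefix_take _ _) (inodes_nodes (ssvalP x)).
    have Hs : forall x : INode t, size (ssval (h0 x)) = d (ssval x).
      by move=> x; rewrite Hv0 size_takel // -(addn0 (size _)) B // ssvalP.
    exists h0.
      rewrite inE; apply: mch_of.
      * by move=> x; rewrite Hv0 prefix_take.
      * by move=> x1 x2 Px; rewrite !Hs M // ssvalP.
    apply/eq_in_map => k Hk; have [x <-] := inode_ex Hk; by rewrite dH_val Hs.
- rewrite map_inj_in_uniq ?enum_uniq //.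
  move=> h1 h2; rewrite !mem_enum !inE => H1 H2 E.
  apply/ffunP => x. apply: val_inj.
  have [p1 _] := mch_prefix H1; have [p2 _] := mch_prefix H2.
  apply: (prefix_eq_size (p1 x) (p2 x)).
  have := (eq_in_map _ _ _).2 E (ssval x) (ssvalP x). by rewrite !dH_val.
- exact: V_uniq.
Qed.

Lemma g_pos t n : 0 < g t n.
Proof.
elim: t n => [|l IHl r IHr] n //.
rewrite g_node big_ltn // addn_gt0 muln_gt0 IHl IHr //.
Qed.

Fixpoint cat j := if j is j'.+1 then Node (cat j') Leaf else Leaf.
Fixpoint lp j := if j is j'.+1 then Node (lp j') (Node Leaf Leaf) else Leaf.

Lemma nleaves_cat j : nleaves (cat j) = j.+1.
Proof. elim: j => //= j ->; by rewrite addn1. Qed.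

Lemma nleaves_lp j : nleaves (lp j) = (2 * j).+1.
Proof. elim: j => //= j ->; lia. Qed.

Lemma geo N : 2 + \sum_(1 <= q < N.+1) 2 ^ q = 2 ^ N.+1.
Proof.
elim: N => [|N IH]; first by rewrite big_geq.
rewrite big_nat_recr //= addnA IH (expnS 2 N.+1). lia.
Qed.

Lemma cat_up j n : g (cat j) n <= 2 ^ (n + 2 * j).
Proof.
elim: j n => [|j IH] n; first by rewrite /= expn_gt0.
rewrite [cat _]/= g_node.
apply: (@leq_trans (\sum_(1 <= q < n.+2) 2 ^ (2 * j) * 2 ^ q)).
  apply: leq_sum => q _. rewrite [g Leaf q]/= muln1 -expnD addnC. exact: IH.
rewrite -big_distrr /=.
have := geo n.+1. move=> E.
have : \sum_(1 <= q < n.+2) 2 ^ q <= 2 ^ n.+2 by rewrite -E leq_addl.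
move=> H. apply: (leq_trans (leq_mul (leqnn _) H)).
rewrite -expnD. apply: leq_pexp2l => //. lia.
Qed.

Fixpoint rp q p := if p is p'.+1 then rp q p' * (q + p) else 1.
Fixpoint df j := if j is j'.+1 then df j' * (2 * j' + 3) else 1.

Lemma rpS q p : rp q p.+1 = q.+1 * rp q.+1 p.
Proof.
elim: p => [|p IH]; first by rewrite /= mul1n muln1; lia.
change (rp q p.+1 * (q + p.+2) = q.+1 * (rp q.+1 p * (q.+1 + p.+1))). rewrite IH -mulnA. congr (_ * (_ * _)). lia.
Qed.

Lemma rp_mono q q' p : q <= q' -> rp q p <= rp q' p.
Proof.
move=> H. elim: p => [|p IH] //=. apply: leq_mul IH _. by rewrite leq_add2r.
Qed.

Lemma df_pos j : 0 < df j.
Proof. elim: j => //= j IH. rewrite muln_gt0 IH /=; lia. Qed.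

Lemma hockey N p : p.+1 * \sum_(0 <= q < N.+1) rp q p = rp N p.+1.
Proof.
elim: N => [|N IH]; first by rewrite big_nat1 /= add0n mulnC.
rewrite big_nat_recr // mulnDr IH rpS. change (N.+1 * rp N.+1 p + p.+1 * rp N.+1 p = rp N.+1 p * (N.+1 + p.+1)). nia.
Qed.

Lemma g_cherry q : g (Node Leaf Leaf) q = q.+1.
Proof. rewrite g_node (eq_bigr (fun=> 1)) // sum_nat_const_nat muln1. lia. Qed.

Lemma lp_lb j n : rp n.+1 (2 * j) <= df j * g (lp j) n.
Proof.
elim: j n => [|j IH] n; first by [].
rewrite [lp _]/= g_node [df _]/=.
set c := (2 * j).+2.
have Hc : 2 * j.+1 = c by rewrite /c; lia.
have H3 : 2 * j + 3 = c.+1 by rewrite /c; lia.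
rewrite Hc H3.
set S1 := \sum_(1 <= q < n.+2) rp q c.-1.
have HS : S1 <= df j * \sum_(1 <= q < n.+2) g (lp j) q * g (Node Leaf Leaf) q.
  rewrite big_distrr. apply: leq_sum => q _.
  rewrite g_cherry. change (rp q c.-1 <= df j * (g (lp j) q * q.+1)). rewrite mulnA. have -> : c.-1 = (2 * j).+1 by []. rewrite rpS mulnC. apply: leq_mul => //.
set r0 := rp 0 c.-1.
have A : c * (r0 + S1) = rp n.+1 c.
  have E := hockey n.+1 c.-1. rewrite big_ltn // in E.
have B : c * c.+1 * r0 <= rp n.+1 c.
  apply: (@leq_trans (rp 1 c)); last by apply: rp_mono.
  have : rp 0 c.+1 = 1 * rp 1 c by rewrite rpS.
  rewrite mul1n => <-. rewrite /r0 /c /= add0n. lia.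
have : rp n.+1 c <= c.+1 * S1.
  have Hc0 : 0 < c by [].
  rewrite -(leq_pmul2l Hc0). nia.
move=> H. apply: (leq_trans H). apply: (leq_trans (leq_mul (leqnn c.+1) HS)).
by rewrite mulnA [c.+1 * df j]mulnC.
Qed.

Lemma rp_df k : rp 1 (2 * k) = df k * (2 ^ k * k`!).
Proof.
elim: k => [|k IH]; first by [].
have -> : 2 * k.+1 = (2 * k).+2 by lia.
change (rp 1 (2 * k) * (1 + (2 * k).+1) * (1 + (2 * k).+2) = df k * (2 * k + 3) * (2 ^ k.+1 * k.+1`!)).
rewrite IH expnS factS. nia.
Qed.

Lemma lp_g k : 2 ^ k * k`! <= g (lp k) 0.
Proof.
have := lp_lb k 0. rewrite rp_df leq_pmul2l //. exact: df_pos.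
Qed.


Lemma expn_pow m n : m ^ n = Nat.pow m n.
Proof. elim: n => [|n IH] //. by rewrite expnS IH. Qed.

Lemma fact_eq n : n`! = fact n.
Proof. elim: n => [|n IH] //. by rewrite factS IH. Qed.

From Stdlib Require Import Reals.

Theorem corollary2 (m hp hm : nat) :
  odd m -> 7 <= m -> is_hplus m hp -> is_hminus m hm ->
  (pow (sqrt (INR m - 1) / (4 * sqrt (exp 1))) m
     <= INR hp / INR hm)%R.
Proof.
move=> Hodd H7 [_ Hp] [[t0 [Ht0 Ehm]] Hm].
set k := m./2.
have Em : m = (2 * k).+1.
  have := odd_double_half m. rewrite Hodd -/k -mul2n /=. lia.
have Hk : 1 <= k by lia.
have HP : expn 2 k * k`! <= hp.
  apply: (leq_trans (lp_g k)). rewrite -nmch_g. apply: Hp. by rewrite nleaves_lp -Em.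
have HM : hm <= expn 16 k.
  apply: (leq_trans (Hm (cat (2 * k)) _)); first by rewrite nleaves_cat -Em.
  rewrite nmch_g. apply: (leq_trans (cat_up _ _)). rewrite add0n mulnA expnM. by [].
have H1 : 0 < hm by rewrite -Ehm nmch_g g_pos.
have E2 : m = Nat.add (Nat.mul 2 k) 1 by lia.
rewrite E2.
apply: real_final.
- by apply/leP.
- have := le_INR _ _ (leP HP). rewrite -multE mult_INR !expn_pow pow_INR fact_eq. by [].
- have := le_INR _ _ (leP H1). by [].
- have := le_INR _ _ (leP HM). rewrite expn_pow pow_INR => H. apply: (Rle_trans _ _ _ H). right. f_equal. simpl. ring.
Qed.
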